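(* Let $r, K, m, p, q, s, \gamma_A, \gamma_T$ be positive real constants, let $T>0$, and define, for $t\ge 0$ and $y\in\mathbb{R}$, $$f(t,y)=ry\Big(1-\frac{y}{K}\Big)+my\big(1-e^{-\gamma_A t}\big)+py\,e^{-\gamma_A t}-qy\big(1-e^{-\gamma_T t}\big)-sy\,e^{-\gamma_T t}.$$ Consider the initial value problem $\frac{dy}{dt}=f(t,y)$, $y(0)=y_0$, with $y_0>0$. Then this problem has a unique solution on $[0,T]$; this solution remains positive. Moreover, for the solution on $[0,\infty)$, $$\limsup_{t\to\infty} y(t)\le \frac{K(r+m+p)}{r}\qquad\text{and}\qquad \liminf_{t\to\infty} y(t)\ge \frac{K(r-q-s)}{r}.$$
   Context: This is a model for the proportion $y=n$ of damaged cells under a constant dose of inorganic arsenic (damaging, rate constant $\gamma_A$) and black tea (mitigating, rate constant $\gamma_T$): $r$ is a growth rate, $K$ a normalized carrying capacity, and $m,p,q,s$ are positive constants. *)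

(* Defs.v *)
From Stdlib Require Import Reals Lra.
From Coquelicot Require Import Coquelicot.
Open Scope R_scope.

Definition f_model (r K m p q s gA gT : R) (t y : R) : R :=
  r * y * (1 - y / K) + m * y * (1 - exp (- gA * t)) + p * y * exp (- gA * t)
  - q * y * (1 - exp (- gT * t)) - s * y * exp (- gT * t).

(* y has derivative l at t relative to the set D (one-sided at endpoints of an
   interval): the difference quotient tends to l as t+h -> t within D. *)
Definition has_deriv_within (D : R -> Prop) (y : R -> R) (t l : R) : Prop :=
  filterlim (fun h => (y (t + h) - y t) / h)
    (within (fun h => h <> 0 /\ D (t + h)) (locally 0)) (locally l).

Definition is_solution_on (D : R -> Prop) (F : R -> R -> R) (y0 : R)
    (y : R -> R) : Prop :=
  y 0 = y0 /\ forall t, D t -> has_deriv_within D y t (F t (y t)).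

Definition interval_0T (T : R) : R -> Prop := fun t => 0 <= t <= T.
Definition halfline : R -> Prop := fun t => 0 <= t.

Definition sup_from (y : R -> R) (t0 : R) : Rbar :=
  Lub_Rbar (fun v => exists t, t0 <= t /\ v = y t).
Definition inf_from (y : R -> R) (t0 : R) : Rbar :=
  Glb_Rbar (fun v => exists t, t0 <= t /\ v = y t).
Definition limsup_infty (y : R -> R) : Rbar :=
  Rbar_glb (fun v => exists t0, v = sup_from y t0).
Definition liminf_infty (y : R -> R) : Rbar :=
  Rbar_lub (fun v => exists t0, v = inf_from y t0).

(* Main.v *)
Require Import Defs.
From Stdlib Require Import Reals Lra.
From Coquelicot Require Import Coquelicot.
Open Scope R_scope.

Lemma ball_R (x e z : R) : ball x e z <-> Rabs (z - x) < e.
Proof. reflexivity. Qed.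

Lemma hdw_eps D y t l : has_deriv_within D y t l ->
  forall eps, 0 < eps -> exists delta, 0 < delta /\ forall h, h <> 0 -> D (t+h) ->
   Rabs h < delta -> Rabs ((y(t+h) - y t)/h - l) < eps.
Proof.
  intros H eps Heps.
  assert (Hb : locally l (ball l eps)) by (exists (mkposreal eps Heps); auto).
  specialize (H _ Hb). destruct H as [d Hd].
  exists d. split. apply cond_pos. intros h H1 H2 H3.
  apply (Hd h). apply ball_R. rewrite Rminus_0_r. exact H3. split; auto.
Qed.

Lemma full_hdw D y t l : derivable_pt_lim y t l -> has_deriv_within D y t l.
Proof.
  intros H P [e He]. destruct (H e (cond_pos e)) as [d Hd].
  exists d. intros h Hh [Hh0 _]. apply He. apply ball_R.
  apply Hd; auto. apply ball_R in Hh. replace h with (h - 0) by ring. exact Hh.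
Qed.

Definition a_f (r m p q s gA gT t : R) : R :=
  r + m * (1 - exp (- gA * t)) + p * exp (- gA * t)
  - q * (1 - exp (- gT * t)) - s * exp (- gT * t).
Definition A_f (r m p q s gA gT t : R) : R :=
  (r + m - q) * t + (p - m) * (1 - exp (- gA * t)) / gA
  + (q - s) * (1 - exp (- gT * t)) / gT.

Lemma A_deriv r m p q s gA gT t : 0 < gA -> 0 < gT ->
  is_derive (A_f r m p q s gA gT) t (a_f r m p q s gA gT t).
Proof.
  intros hA hT. unfold A_f, a_f. auto_derive. auto. field. lra.
Qed.

Definition I_f (r m p q s gA gT t : R) : R :=
  RInt (fun x => exp (A_f r m p q s gA gT x)) 0 t.

Lemma expA_cont r m p q s gA gT x : 0 < gA -> 0 < gT ->
  continuous (fun x => exp (A_f r m p q s gA gT x)) x.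
Proof.
  intros hA hT. apply (@ex_derive_continuous R_AbsRing R_NormedModule).
  apply (ex_derive_comp exp (A_f r m p q s gA gT)).
  - apply ex_derive_Reals_1. apply derivable_pt_exp.
  - eexists. apply A_deriv; auto.
Qed.

Lemma I_deriv r m p q s gA gT t : 0 < gA -> 0 < gT ->
  is_derive (I_f r m p q s gA gT) t (exp (A_f r m p q s gA gT t)).
Proof.
  intros hA hT. apply (is_derive_RInt (fun x => exp (A_f r m p q s gA gT x)) (I_f r m p q s gA gT) 0 t).
  - exists (mkposreal 1 Rlt_0_1). intros b _. unfold I_f. apply (@RInt_correct R_CompleteNormedModule).
    apply (@ex_RInt_continuous R_CompleteNormedModule). intros; apply expA_cont; auto.
  - apply expA_cont; auto.
Qed.

Lemma I_nonneg r m p q s gA gT t : 0 < gA -> 0 < gT -> 0 <= t ->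
  0 <= I_f r m p q s gA gT t.
Proof.
  intros hA hT ht. unfold I_f. apply RInt_ge_0; auto.
  apply (@ex_RInt_continuous R_CompleteNormedModule). intros; apply expA_cont; auto.
  intros; left; apply exp_pos.
Qed.

Lemma I_0 r m p q s gA gT : I_f r m p q s gA gT 0 = 0.
Proof. unfold I_f. rewrite RInt_point. reflexivity. Qed.

Lemma A_0 r m p q s gA gT : A_f r m p q s gA gT 0 = 0.
Proof. unfold A_f. rewrite !Rmult_0_r, exp_0. unfold Rdiv. ring. Qed.

Definition U_f (r K m p q s gA gT y0 t : R) : R :=
  exp (- A_f r m p q s gA gT t) * (/ y0 + r / K * I_f r m p q s gA gT t).

Lemma U_deriv r K m p q s gA gT y0 t : 0 < gA -> 0 < gT -> K <> 0 -> y0 <> 0 ->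
  is_derive (U_f r K m p q s gA gT y0) t
    (- a_f r m p q s gA gT t * U_f r K m p q s gA gT y0 t + r / K).
Proof.
  intros hA hT hK hy. unfold U_f.
  pose proof (A_deriv r m p q s gA gT t hA hT) as HA.
  pose proof (I_deriv r m p q s gA gT t hA hT) as HI.
  auto_derive.
  - split. eexists; exact HA. split. eexists; exact HI. auto.
  - change (Derive (fun x => A_f r m p q s gA gT x) t) with (Derive (A_f r m p q s gA gT) t).
    change (Derive (fun x => I_f r m p q s gA gT x) t) with (Derive (I_f r m p q s gA gT) t).
    rewrite (is_derive_unique _ _ _ HA), (is_derive_unique _ _ _ HI).
    rewrite exp_Ropp. field. repeat split; auto. apply Rgt_not_eq, exp_pos.
Qed.


Lemma U_pos r K m p q s gA gT y0 t : 0 < gA -> 0 < gT -> 0 < r -> 0 < K -> 0 < y0 -> 0 <= t ->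
  0 < U_f r K m p q s gA gT y0 t.
Proof.
  intros. unfold U_f. apply Rmult_lt_0_compat. apply exp_pos.
  pose proof (I_nonneg r m p q s gA gT t H H0 H4).
  assert (0 < / y0) by (apply Rinv_0_lt_compat; auto).
  assert (0 <= r / K) by (left; apply Rdiv_lt_0_compat; auto).
  nra.
Qed.

Lemma U_0 r K m p q s gA gT y0 : U_f r K m p q s gA gT y0 0 = / y0.
Proof. unfold U_f. rewrite A_0, I_0, Ropp_0, exp_0. ring. Qed.

Definition Y_f r K m p q s gA gT y0 t := / U_f r K m p q s gA gT y0 t.

Lemma Y_deriv r K m p q s gA gT y0 t : 0 < gA -> 0 < gT -> 0 < r -> 0 < K -> 0 < y0 -> 0 <= t ->
  derivable_pt_lim (Y_f r K m p q s gA gT y0) t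
    (f_model r K m p q s gA gT t (Y_f r K m p q s gA gT y0 t)).
Proof.
  intros. apply is_derive_Reals.
  pose proof (U_pos r K m p q s gA gT y0 t H H0 H1 H2 H3 H4) as Hp.
  pose proof (U_deriv r K m p q s gA gT y0 t H H0 (Rgt_not_eq _ _ H2) (Rgt_not_eq _ _ H3)) as HU.
  pose proof (is_derive_inv _ _ _ HU (Rgt_not_eq _ _ Hp)) as HI.
  unfold Y_f. replace (f_model r K m p q s gA gT t (/ U_f r K m p q s gA gT y0 t)) with
    (- (- a_f r m p q s gA gT t * U_f r K m p q s gA gT y0 t + r / K) /
     U_f r K m p q s gA gT y0 t ^ 2). exact HI.
  unfold f_model, a_f. field. split; apply Rgt_not_eq; auto.
Qed.

Lemma hdw_cont D y t l : has_deriv_within D y t l ->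
  forall eps, 0 < eps -> exists delta, 0 < delta /\ forall x, D x ->
   Rabs (x - t) < delta -> Rabs (y x - y t) < eps.
Proof.
  intros H eps Heps. destruct (hdw_eps D y t l H 1 Rlt_0_1) as [d [Hd HH]].
  assert (Hl : 0 < Rabs l + 1) by (pose proof (Rabs_pos l); lra).
  exists (Rmin d (eps / (Rabs l + 1))). split.
  { apply Rmin_glb_lt; auto. apply Rdiv_lt_0_compat; auto. }
  intros x Dx Hx.
  destruct (Req_dec x t) as [->|Hne].
  { rewrite Rminus_diag, Rabs_R0; auto. }
  set (h := x - t).
  assert (Hh : h <> 0) by (unfold h; lra).
  assert (Hq := HH h Hh (ltac:(unfold h; replace (t + (x - t)) with x by ring; exact Dx))
    (Rlt_le_trans _ _ _ Hx (Rmin_l _ _))).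
  replace (t + h) with x in Hq by (unfold h; ring).
  set (Q := (y x - y t) / h) in Hq.
  assert (E : y x - y t = h * Q) by (unfold Q; field; auto).
  rewrite E, Rabs_mult.
  assert (HQ : Rabs Q <= Rabs l + 1).
  { pose proof (Rabs_triang (Q - l) l). replace (Q - l + l) with Q in H0 by ring. lra. }
  assert (Hh2 : Rabs h < eps / (Rabs l + 1)) by (apply (Rlt_le_trans _ _ _ Hx (Rmin_r _ _))).
  apply Rle_lt_trans with (Rabs h * (Rabs l + 1)).
  apply Rmult_le_compat_l; auto using Rabs_pos.
  apply (Rmult_lt_compat_r (Rabs l + 1)) in Hh2; auto.
  replace (eps / (Rabs l + 1) * (Rabs l + 1)) with eps in Hh2 by (field; lra). exact Hh2.
Qed.

Lemma hdw_interior D y t l d0 : 0 < d0 -> (forall x, Rabs (x - t) < d0 -> D x) ->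
  has_deriv_within D y t l -> derivable_pt_lim y t l.
Proof.
  intros Hd0 HD H eps Heps. destruct (hdw_eps D y t l H eps Heps) as [d [Hd HH]].
  exists (mkposreal (Rmin d d0) (Rmin_glb_lt _ _ _ Hd Hd0)). simpl.
  intros h Hh Hlt. apply HH; auto.
  apply HD. replace (t + h - t) with h by ring. apply (Rlt_le_trans _ _ _ Hlt (Rmin_r _ _)).
  apply (Rlt_le_trans _ _ _ Hlt (Rmin_l _ _)).
Qed.

Lemma hdw_restrict (D D' : R -> Prop) y t l : (forall x, D' x -> D x) ->
  has_deriv_within D y t l -> has_deriv_within D' y t l.
Proof.
  intros Hs H P HP. destruct (H P HP) as [d Hd]. exists d.
  intros h Hb [H1 H2]. apply Hd; auto.
Qed.

Definition cl (T x : R) := Rmax 0 (Rmin T x).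

Lemma cl_range T x : 0 <= T -> 0 <= cl T x <= T.
Proof. intros. unfold cl, Rmax, Rmin. repeat destruct Rle_dec; lra. Qed.

Lemma cl_id T x : 0 <= x <= T -> cl T x = x.
Proof. intros. unfold cl, Rmax, Rmin. repeat destruct Rle_dec; lra. Qed.

Lemma cl_lip T x y : 0 <= T -> Rabs (cl T x - cl T y) <= Rabs (x - y).
Proof.
  intros. unfold cl, Rmax, Rmin.
  repeat destruct Rle_dec; unfold Rabs; repeat destruct Rcase_abs; lra.
Qed.

Lemma cl_comp_cont T z x : 0 <= T ->
  (forall u, 0 <= u <= T -> forall eps, 0 < eps -> exists delta, 0 < delta /\
     forall v, 0 <= v <= T -> Rabs (v - u) < delta -> Rabs (z v - z u) < eps) ->
  continuity_pt (fun x => z (cl T x)) x.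
Proof.
  intros HT Hc. unfold continuity_pt, continue_in, limit1_in, limit_in; simpl; unfold R_dist.
  intros eps Heps. destruct (Hc (cl T x) (cl_range T x HT) eps Heps) as [d [Hd HH]].
  exists d. split; auto. intros x' [_ Hx'].
  apply HH. apply cl_range; auto.
  apply Rle_lt_trans with (Rabs (x' - x)); auto. apply cl_lip; auto.
Qed.

Lemma cl_cont T x : 0 <= T -> continuity_pt (cl T) x.
Proof.
  intros HT. unfold continuity_pt, continue_in, limit1_in, limit_in; simpl; unfold R_dist.
  intros eps Heps. exists eps. split; auto. intros x' [_ Hx'].
  apply Rle_lt_trans with (Rabs (x' - x)); auto. apply cl_lip; auto.
Qed.

Lemma U_cont r K m p q s gA gT y0 x : 0 < gA -> 0 < gT -> 0 < K -> 0 < y0 ->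
  continuity_pt (U_f r K m p q s gA gT y0) x.
Proof.
  intros. apply derivable_continuous_pt. econstructor. apply is_derive_Reals.
  apply U_deriv; auto; lra.
Qed.

Lemma uniq r K m p q s gA gT y0 T z :
  0 < r -> 0 < K -> 0 < gA -> 0 < gT -> 0 < T -> 0 < y0 ->
  is_solution_on (interval_0T T) (f_model r K m p q s gA gT) y0 z ->
  forall t, 0 <= t <= T -> z t = Y_f r K m p q s gA gT y0 t.
Proof.
  intros hr hK hA hT hT0 hy [Hz0 Hzd].
  set (U := U_f r K m p q s gA gT y0).
  set (c := r / K).
  assert (hc : 0 < c) by (apply Rdiv_lt_0_compat; auto).
  set (zc := fun x => z (cl T x)).
  assert (Hzc : forall x, continuity_pt zc x).
  { intros x. apply cl_comp_cont. lra. intros u Hu eps Heps.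
    exact (hdw_cont _ _ _ _ (Hzd u Hu) eps Heps). }
  assert (Hzc_id : forall x, 0 <= x <= T -> zc x = z x).
  { intros x Hx. unfold zc. rewrite cl_id; auto. }
  destruct (continuity_ab_min zc 0 T (ltac:(lra)) (fun c _ => Hzc c)) as [mx [Hmx _]].
  set (B := Rabs (zc mx)).
  assert (HB : forall x, 0 <= x <= T -> 0 <= z x + B).
  { intros x Hx. rewrite <- Hzc_id by auto. specialize (Hmx x Hx).
    unfold B. pose proof (Rle_abs (- zc mx)). rewrite Rabs_Ropp in H. lra. }
  set (wc := fun x => (1 - zc x * U (cl T x)) * (1 - zc x * U (cl T x)) * exp (-(2*c*B) * cl T x)).
  set (df := fun x => -2*c*(zc x + B) * ((1 - zc x * U (cl T x)) * (1 - zc x * U (cl T x))) * exp (-(2*c*B) * cl T x)).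
  assert (Hwc : forall x, continuity_pt wc x).
  { intros x. unfold wc.
    assert (HUc : continuity_pt (fun x => U (cl T x)) x).
    { apply (continuity_pt_comp (cl T) U). apply cl_cont; lra. apply U_cont; auto. }
    assert (Hh : continuity_pt (fun x => 1 - zc x * U (cl T x)) x).
    { apply continuity_pt_minus. apply continuity_pt_const. intros a b; reflexivity.
      apply continuity_pt_mult; auto. }
    apply continuity_pt_mult. apply continuity_pt_mult; auto.
    apply (continuity_pt_comp (fun x => -(2*c*B) * cl T x) exp).
    apply continuity_pt_mult. apply continuity_pt_const. intros a b; reflexivity. apply cl_cont; lra.
    apply derivable_continuous_pt, derivable_pt_exp. }
  assert (Hder : forall x, 0 < x < T -> is_derive wc x (df x)).
  { intros x Hx.
    assert (Hd0 : 0 < Rmin x (T - x)) by (apply Rmin_glb_lt; lra).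
    assert (HD : forall x', Rabs (x' - x) < Rmin x (T - x) -> 0 <= x' <= T).
    { intros x' H'. pose proof (Rmin_l x (T - x)). pose proof (Rmin_r x (T - x)).
      unfold Rabs in H'; destruct Rcase_abs in H'; lra. }
    assert (Hzx : is_derive z x (f_model r K m p q s gA gT x (z x))).
    { apply is_derive_Reals. apply (hdw_interior (interval_0T T) z x _ _ Hd0 HD).
      apply Hzd. unfold interval_0T; lra. }
    assert (HUx : is_derive U x (- a_f r m p q s gA gT x * U x + r / K)).
    { apply U_deriv; lra. }
    set (w0 := fun x => (1 - z x * U x) * (1 - z x * U x) * exp (-(2*c*B) * x)).
    assert (Hw0 : is_derive w0 x (df x)).
    { unfold w0. auto_derive. 
      { repeat split; eexists; eassumption. }
        replace (Derive (fun x0 : R => z x0) x) with (f_model r K m p q s gA gT x (z x))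
          by (symmetry; apply is_derive_unique; exact Hzx).
        replace (Derive (fun x0 : R => U x0) x) with (- a_f r m p q s gA gT x * U x + r / K)
          by (symmetry; apply is_derive_unique; exact HUx).
        unfold df; cbv beta. rewrite Hzc_id by lra. rewrite cl_id by lra.
        unfold f_model, a_f, c. field. lra. }
    apply (is_derive_ext_loc w0). 2: exact Hw0.
    exists (mkposreal _ Hd0). intros u Hu. apply ball_R in Hu. specialize (HD u Hu).
    unfold w0, wc. rewrite Hzc_id by auto. rewrite cl_id by auto. reflexivity. }
  assert (Hw00 : wc 0 = 0).
  { unfold wc. rewrite Hzc_id by lra. rewrite cl_id by lra. rewrite Hz0.
    unfold U. rewrite U_0. field_simplify. reflexivity. lra. }
  intros t Ht.
  destruct (Req_dec t 0) as [->|Htn].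
  { rewrite Hz0. unfold Y_f. rewrite U_0. rewrite Rinv_inv. reflexivity. }
  destruct (MVT_gen wc 0 t df) as [c0 [Hc0 Heq]].
  { rewrite Rmin_left, Rmax_right by lra. intros x Hx. apply Hder. lra. }
  { intros x _. apply Hwc. }
  rewrite Rmin_left, Rmax_right in Hc0 by lra.
  rewrite Hw00 in Heq.
  assert (Hdf : df c0 <= 0).
  { unfold df. specialize (HB c0 ltac:(lra)). rewrite Hzc_id by lra.
    pose proof (exp_pos (-(2*c*B) * cl T c0)).
    set (hh := 1 - z c0 * U (cl T c0)). set (E := exp (-(2*c*B) * cl T c0)) in *.
    assert (0 <= hh * hh) by nra.
    assert (0 <= c * (z c0 + B)) by nra.
    assert (0 <= c * (z c0 + B) * (hh * hh) * E).
    { apply Rmult_le_pos; [apply Rmult_le_pos|lra]; assumption. }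
    lra. }
  assert (Htp : 0 < t) by (destruct Ht as [[H|H] _]; [auto| congruence]).
  assert (Hwt : wc t <= 0).
  { assert (0 <= (- df c0) * t) by (apply Rmult_le_pos; lra). rewrite !Rminus_0_r in Heq. rewrite Heq. lra. }
  unfold wc in Hwt. rewrite Hzc_id in Hwt by lra. rewrite cl_id in Hwt by lra.
  pose proof (exp_pos (-(2*c*B) * t)).
  assert (Hh : 1 - z t * U t = 0).
  { set (hh := 1 - z t * U t) in *. set (E := exp (-(2*c*B) * t)) in *.
    assert (hh * hh <= 0).
    { destruct (Rle_or_lt (hh*hh) 0) as [H1|H1]; auto.
      pose proof (Rmult_lt_0_compat _ _ H1 H). lra. }
    nra. }
  unfold Y_f. fold U.
  assert (HUt : 0 < U t) by (apply U_pos; lra).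
  apply (Rmult_eq_reg_r (U t)). rewrite Rinv_l by lra. lra. lra.
Qed.

Lemma exp_le1 u : u <= 0 -> exp u <= 1.
Proof.
  intros [H|H]. rewrite <- exp_0. left. apply exp_increasing; auto. rewrite H, exp_0. lra.
Qed.

Lemma a_bounds r m p q s gA gT x : 0 < m -> 0 < p -> 0 < q -> 0 < s -> 0 < gA -> 0 < gT -> 0 <= x ->
  r - q - s <= a_f r m p q s gA gT x <= r + m + p.
Proof.
  intros. unfold a_f.
  assert (h1 : exp (- gA * x) <= 1) by (apply exp_le1; nra).
  assert (h2 : exp (- gT * x) <= 1) by (apply exp_le1; nra).
  pose proof (exp_pos (- gA * x)). pose proof (exp_pos (- gT * x)).
  split; nra.
Qed.

Lemma G_mono r K m p q s gA gT y0 L (up : bool) :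
  0 < r -> 0 < K -> 0 < gA -> 0 < gT -> 0 < y0 -> 0 < L ->
  (forall x, 0 <= x -> if up then a_f r m p q s gA gT x <= L else L <= a_f r m p q s gA gT x) ->
  forall t, 0 <= t ->
  let G := (U_f r K m p q s gA gT y0 t - r / K / L) * exp (L * t) in
  if up then / y0 - r / K / L <= G else G <= / y0 - r / K / L.
Proof.
  intros hr hK hA hT hy hL Ha t Ht G.
  set (U := U_f r K m p q s gA gT y0).
  set (Gf := fun x => (U x - r / K / L) * exp (L * x)).
  set (dG := fun x => ((L - a_f r m p q s gA gT x) * U x) * exp (L * x)).
  assert (Hd : forall x, is_derive Gf x (dG x)).
  { intros x. assert (HUx : is_derive U x (- a_f r m p q s gA gT x * U x + r / K)).
    { apply U_deriv; lra. }
    unfold Gf. auto_derive. { repeat split; eexists; eassumption. }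
    replace (Derive (fun x0 : R => U x0) x) with (- a_f r m p q s gA gT x * U x + r / K)
      by (symmetry; apply is_derive_unique; exact HUx).
    unfold dG. field. lra. }
  assert (HG0 : Gf 0 = / y0 - r / K / L).
  { unfold Gf, U. rewrite U_0, Rmult_0_r, exp_0. ring. }
  destruct (Req_dec t 0) as [->|Htn].
  { fold U in G. unfold G. rewrite <- HG0. unfold Gf. destruct up; lra. }
  assert (Htp : 0 < t) by lra.
  destruct (MVT_gen Gf 0 t dG) as [c0 [Hc0 Heq]].
  { intros x _. apply Hd. }
  { intros x _. apply derivable_continuous_pt. econstructor. apply is_derive_Reals. apply Hd. }
  rewrite Rmin_left, Rmax_right in Hc0 by lra.
  rewrite HG0 in Heq. rewrite Rminus_0_r in Heq.
  assert (HU : 0 < U c0) by (apply U_pos; lra).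
  pose proof (exp_pos (L * c0)).
  specialize (Ha c0 ltac:(lra)).
  change G with (Gf t).
  destruct up.
  - assert (0 <= dG c0 * t).
    { apply Rmult_le_pos; [|lra]. unfold dG. apply Rmult_le_pos; [|lra]. apply Rmult_le_pos; lra. }
    lra.
  - assert (0 <= - dG c0 * t).
    { apply Rmult_le_pos; [|lra]. unfold dG.
      replace (- ((L - a_f r m p q s gA gT c0) * U c0 * exp (L * c0))) with
        ((a_f r m p q s gA gT c0 - L) * U c0 * exp (L * c0)) by ring.
      apply Rmult_le_pos; [|lra]. apply Rmult_le_pos; lra. }
    lra.
Qed.

Lemma Y_upper r K m p q s gA gT y0 :
  0 < r -> 0 < K -> 0 < m -> 0 < p -> 0 < q -> 0 < s -> 0 < gA -> 0 < gT -> 0 < y0 ->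
  forall eps, 0 < eps -> exists t0, 0 <= t0 /\ forall t, t0 <= t ->
    Y_f r K m p q s gA gT y0 t <= K * (r + m + p) / r + eps.
Proof.
  intros hr hK hm hp hq hs hA hT hy eps he.
  set (M := r + m + p). set (c := r / K). set (B := K * M / r).
  assert (hM : 0 < M) by (unfold M; lra).
  assert (hc : 0 < c) by (apply Rdiv_lt_0_compat; auto).
  assert (hB : 0 < B) by (unfold B; apply Rdiv_lt_0_compat; nra).
  assert (HB : / B = c / M) by (unfold B, c; field; lra).
  set (eta := c / M - / (B + eps)).
  assert (heta : 0 < eta).
  { unfold eta. rewrite <- HB. apply Rlt_Rminus. apply Rinv_lt_contravar; nra. }
  set (d := Rabs (/ y0 - c / M)).
  assert (hd : 0 <= d) by apply Rabs_pos.
  exists (d / (M * eta)). split.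
  { apply Rmult_le_pos; auto. left. apply Rinv_0_lt_compat. nra. }
  intros t Ht.
  assert (Ht0 : 0 <= t).
  { apply Rle_trans with (d / (M * eta)); auto. apply Rmult_le_pos; auto. left. apply Rinv_0_lt_compat. nra. }
  assert (Hmt : d <= M * t * eta).
  { apply (Rmult_le_compat_r (M * eta)) in Ht; [|nra].
    replace (d / (M * eta) * (M * eta)) with d in Ht by (field; nra). nra. }
  pose proof (G_mono r K m p q s gA gT y0 M true hr hK hA hT hy hM) as HG.
  assert (Ha : forall x, 0 <= x -> a_f r m p q s gA gT x <= M).
  { intros x Hx. apply (a_bounds r m p q s gA gT x); auto. }
  specialize (HG Ha t Ht0). simpl in HG. fold c in HG.
  set (U := U_f r K m p q s gA gT y0) in *.
  pose proof (exp_ineq1_le (M * t)) as HE.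
  assert (Hd1 : - d <= / y0 - c / M) by (unfold d; pose proof (Rle_abs (-(/ y0 - c / M))); rewrite Rabs_Ropp in H; lra).
  assert (HU : c / M - eta <= U t).
  { destruct (Rle_or_lt (c / M - eta) (U t)) as [H|H]; auto.
    exfalso. set (E := exp (M * t)) in *.
    assert ((U t - c / M) * E < - eta * E) by (apply Rmult_lt_compat_r; [unfold E; apply exp_pos| lra]).
    assert (- eta * E <= - eta * (1 + M * t)) by nra.
    nra. }
  assert (HU' : / (B + eps) <= U t) by (unfold eta in HU; lra).
  unfold Y_f. fold U.
  rewrite <- (Rinv_inv (B + eps)).
  apply Rinv_le_contravar; auto. apply Rinv_0_lt_compat; lra.
Qed.

Lemma Y_lower r K m p q s gA gT y0 :
  0 < r -> 0 < K -> 0 < m -> 0 < p -> 0 < q -> 0 < s -> 0 < gA -> 0 < gT -> 0 < y0 ->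
  forall eps, 0 < eps -> exists t0, 0 <= t0 /\ forall t, t0 <= t ->
    K * (r - q - s) / r - eps <= Y_f r K m p q s gA gT y0 t.
Proof.
  intros hr hK hm hp hq hs hA hT hy eps he.
  set (N := r - q - s). set (c := r / K). set (B := K * N / r).
  assert (hc : 0 < c) by (apply Rdiv_lt_0_compat; auto).
  assert (HYp : forall t, 0 <= t -> 0 < Y_f r K m p q s gA gT y0 t).
  { intros t Ht. unfold Y_f. apply Rinv_0_lt_compat. apply U_pos; auto. }
  destruct (Rle_or_lt (B - eps) 0) as [Hneg|Hpos].
  { exists 0. split. lra. intros t Ht. specialize (HYp t Ht). lra. }
  assert (hN : 0 < N).
  { unfold B in Hpos. destruct (Rle_or_lt N 0); auto.
    assert (K * N / r <= 0).
    { unfold Rdiv. apply Rmult_le_0_r. nra. left; apply Rinv_0_lt_compat; auto. }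
    lra. }
  assert (HB : / B = c / N) by (unfold B, c; field; lra).
  assert (hB : 0 < B) by lra.
  set (eta := / (B - eps) - c / N).
  assert (heta : 0 < eta).
  { unfold eta. rewrite <- HB. apply Rlt_Rminus. apply Rinv_lt_contravar; nra. }
  set (d := Rabs (/ y0 - c / N)).
  assert (hd : 0 <= d) by apply Rabs_pos.
  exists (d / (N * eta)). split.
  { apply Rmult_le_pos; auto. left. apply Rinv_0_lt_compat. nra. }
  intros t Ht.
  assert (Ht0 : 0 <= t).
  { apply Rle_trans with (d / (N * eta)); auto. apply Rmult_le_pos; auto. left. apply Rinv_0_lt_compat. nra. }
  assert (Hmt : d <= N * t * eta).
  { apply (Rmult_le_compat_r (N * eta)) in Ht; [|nra].
    replace (d / (N * eta) * (N * eta)) with d in Ht by (field; nra). nra. }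
  pose proof (G_mono r K m p q s gA gT y0 N false hr hK hA hT hy hN) as HG.
  assert (Ha : forall x, 0 <= x -> N <= a_f r m p q s gA gT x).
  { intros x Hx. apply (a_bounds r m p q s gA gT x); auto. }
  specialize (HG Ha t Ht0). simpl in HG. fold c in HG.
  set (U := U_f r K m p q s gA gT y0) in *.
  pose proof (exp_ineq1_le (N * t)) as HE.
  assert (Hd1 : / y0 - c / N <= d) by (unfold d; apply Rle_abs).
  assert (HU : U t <= c / N + eta).
  { destruct (Rle_or_lt (U t) (c / N + eta)) as [H|H]; auto.
    exfalso. set (E := exp (N * t)) in *.
    assert (eta * E < (U t - c / N) * E) by (apply Rmult_lt_compat_r; [unfold E; apply exp_pos| lra]).
    assert (eta * (1 + N * t) <= eta * E) by nra.
    nra. }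
  assert (HU' : U t <= / (B - eps)) by (unfold eta in HU; lra).
  assert (HUp : 0 < U t) by (apply U_pos; auto).
  unfold Y_f. fold U.
  rewrite <- (Rinv_inv (B - eps)).
  apply Rinv_le_contravar; auto.
Qed.

Lemma limsup_bound y B : (forall eps, 0 < eps -> exists t0, forall t, t0 <= t -> y t <= B + eps) ->
  Rbar_le (limsup_infty y) (Finite B).
Proof.
  intros H.
  assert (H1 : forall eps, 0 < eps -> Rbar_le (limsup_infty y) (Finite (B + eps))).
  { intros eps he. destruct (H eps he) as [t0 Ht0].
    apply Rbar_le_trans with (sup_from y t0).
    - unfold limsup_infty, Rbar_glb. apply (proj1 (proj2_sig (Rbar_ex_glb _))).
      exists t0; reflexivity.
    - unfold sup_from. destruct (Lub_Rbar_correct (fun v => exists t, t0 <= t /\ v = y t)) as [_ Hl].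
      apply Hl. intros x [t [Ht ->]]. simpl. apply Ht0; auto. }
  revert H1. destruct (limsup_infty y) as [v| |]; intros H1; simpl.
  - destruct (Rle_or_lt v B) as [Hv|Hv]; auto.
    specialize (H1 ((v - B) / 2) ltac:(lra)). simpl in H1. lra.
  - specialize (H1 1 Rlt_0_1). simpl in H1. contradiction.
  - auto.
Qed.

Lemma liminf_bound y B : (forall eps, 0 < eps -> exists t0, forall t, t0 <= t -> B - eps <= y t) ->
  Rbar_le (Finite B) (liminf_infty y).
Proof.
  intros H.
  assert (H1 : forall eps, 0 < eps -> Rbar_le (Finite (B - eps)) (liminf_infty y)).
  { intros eps he. destruct (H eps he) as [t0 Ht0].
    apply Rbar_le_trans with (inf_from y t0).
    - unfold inf_from. destruct (Glb_Rbar_correct (fun v => exists t, t0 <= t /\ v = y t)) as [_ Hl].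
      apply Hl. intros x [t [Ht ->]]. simpl. apply Ht0; auto.
    - unfold liminf_infty, Rbar_lub. apply (proj1 (proj2_sig (Rbar_ex_lub _))).
      exists t0; reflexivity. }
  revert H1. destruct (liminf_infty y) as [v| |]; intros H1; simpl.
  - destruct (Rle_or_lt B v) as [Hv|Hv]; auto.
    specialize (H1 ((B - v) / 2) ltac:(lra)). simpl in H1. lra.
  - auto.
  - specialize (H1 1 Rlt_0_1). simpl in H1. contradiction.
Qed.

Theorem mainTheorem1 (r K m p q s gA gT T y0 : R)
  (hr : 0 < r) (hK : 0 < K) (hm : 0 < m) (hp : 0 < p) (hq : 0 < q)
  (hs : 0 < s) (hgA : 0 < gA) (hgT : 0 < gT) (hT : 0 < T) (hy0 : 0 < y0) :
  let F := f_model r K m p q s gA gT in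
  (* unique solution on [0,T], which is positive *)
  (exists y : R -> R,
     is_solution_on (interval_0T T) F y0 y
     /\ (forall t, 0 <= t <= T -> 0 < y t)
     /\ (forall z : R -> R, is_solution_on (interval_0T T) F y0 z ->
           forall t, 0 <= t <= T -> z t = y t))
  /\
  (* the solution on [0,oo) exists, and every such solution obeys the bounds *)
  (exists y : R -> R, is_solution_on halfline F y0 y)
  /\
  (forall y : R -> R, is_solution_on halfline F y0 y ->
     Rbar_le (limsup_infty y) (Finite (K * (r + m + p) / r))
     /\ Rbar_le (Finite (K * (r - q - s) / r)) (liminf_infty y)).
Proof.
  intros F.
  set (Y := Y_f r K m p q s gA gT y0).
  assert (Hsol : forall D : R -> Prop, (forall t, D t -> 0 <= t) -> is_solution_on D F y0 Y).
  { intros D HD. split.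
    - unfold Y, Y_f. rewrite U_0. apply Rinv_inv.
    - intros t Ht. apply full_hdw. apply Y_deriv; auto. }
  split; [|split].
  - exists Y. split; [|split].
    + apply Hsol. intros t [Ht _]; exact Ht.
    + intros t Ht. unfold Y, Y_f. apply Rinv_0_lt_compat. apply U_pos; tauto.
    + intros z Hz t Ht. apply (uniq r K m p q s gA gT y0 T z); auto.
  - exists Y. apply Hsol. intros t Ht; exact Ht.
  - intros y Hy.
    assert (Heq : forall t, 0 <= t -> y t = Y t).
    { intros t Ht. apply (uniq r K m p q s gA gT y0 (t + 1) y); try lra.
      destruct Hy as [H0 Hd]. split; auto. intros t' Ht'.
      apply hdw_restrict with halfline.
      + intros x [Hx _]; exact Hx.
      + apply Hd. unfold halfline, interval_0T in *. lra. }
    split.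
    + apply limsup_bound. intros eps he.
      destruct (Y_upper r K m p q s gA gT y0 hr hK hm hp hq hs hgA hgT hy0 eps he) as [t0 [Ht0 H]].
      exists t0. intros t Ht. rewrite Heq by lra. apply H; auto.
    + apply liminf_bound. intros eps he.
      destruct (Y_lower r K m p q s gA gT y0 hr hK hm hp hq hs hgA hgT hy0 eps he) as [t0 [Ht0 H]].
      exists t0. intros t Ht. rewrite Heq by lra. apply H; auto.
Qed.
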